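(* Let $n=4$ and let $T$ be a tree metric on the taxa $\{i,j,k,l\}=\{1,2,3,4\}$ realized by the quartet tree $(ij|kl)$: the leaves $i,j$ are attached to one endpoint of an internal edge of weight $g>0$, the leaves $k,l$ to its other endpoint, and the pendant edges to the leaves $i,j,k,l$ have positive weights $e_i,e_j,e_k,e_l$. Then $T$ is a tropical mixture $D\oplus \bar D$ of two star tree metrics $D,\bar D$ if and only if $e_i,e_j>g$ or $e_k,e_l>g$. Moreover, consider the fiber over $T$, i.e. the set of ordered pairs $(D,\bar D)$ of star tree metrics with $D\oplus\bar D=T$, each pair recorded by its $8$ edge weights in $\mathbb{R}_+^8$. If exactly one of the two pairs of inequalities holds, the fiber consists of four pairwise disjoint $2$-dimensional families of pairs $(D,\bar D)$, each corresponding to a $2$-dimensional polygon in $\mathbb{R}_+^8$, together with their orbits under the action of $\mathfrak{S}_2$ swapping $D$ and $\bar D$; all these orbits have size $2$. If both pairs of inequalities hold, the two collections of families are disjoint and the fiber consists of eight families of $2$-dimensional polygons together with their orbits; moreover there is a one-to-one correspondence between the two sets of four families, after suitably relabeling the leaves of the resulting trees.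
   Context: A dissimilarity map on $n$ taxa is a symmetric matrix $D\in\mathbb{R}_{\ge 0}^{n\times n}$ with zero diagonal. A weighted tree on $n$ taxa is a tree with leaves labeled $1,\dots,n$ and nonnegative edge weights; its tree metric is $d(i,j)=$ sum of the weights along the unique path from $i$ to $j$. A star tree metric is the tree metric of a star tree (a single internal vertex adjacent to all $n$ leaves) all of whose $n$ edges have strictly positive weights; thus $D_{pq}=w_p+w_q$ for $p\neq q$ with all $w_p>0$. The tropical mixture of two dissimilarity maps is the entrywise maximum: $(D\oplus\bar D)_{pq}=\max\{D_{pq},\bar D_{pq}\}$. *)

(* Defs.v *)
From HB Require Import structures.
From mathcomp Require Import all_boot all_order all_algebra all_fingroup.
From mathcomp Require Import reals.
Set Implicit Arguments. Unset Strict Implicit. Unset Printing Implicit Defensive.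
Import Order.TTheory GRing.Theory Num.Theory.
Local Open Scope ring_scope.

(* Taxa are the four leaves 'I_4 = {0,1,2,3} (standing for {1,2,3,4}). *)

Definition dmap (R : realType) := 'I_4 -> 'I_4 -> R.

Definition star_metric (R : realType) (w : {ffun 'I_4 -> R}) : dmap R :=
  fun p q => if p == q then 0 else w p + w q.

Definition is_star_metric (R : realType) (D : dmap R) : Prop :=
  exists w : {ffun 'I_4 -> R}, (forall p, 0 < w p) /\
    forall p q, D p q = star_metric w p q.

Definition tmix (R : realType) (D Db : dmap R) : dmap R :=
  fun p q => Num.max (D p q) (Db p q).

Definition is_mixture_of_two_stars (R : realType) (T : dmap R) : Prop :=
  exists D Db : dmap R, is_star_metric D /\ is_star_metric Db /\
    forall p q, T p q = tmix D Db p q.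

(** Tree metric of the quartet tree (ij|kl): leaves i,j hang off one end of
    an internal edge of weight g, leaves k,l off the other end; the pendant
    edge to leaf p has weight e p.  Path length between p <> q is
    e p + e q, plus g iff p and q lie on different sides of the split
    {i,j} | {k,l}. *)
Definition quartet_metric (R : realType) (i j : 'I_4) (e : {ffun 'I_4 -> R})
    (g : R) : dmap R :=
  fun p q => if p == q then 0 else
    e p + e q + (if ((p == i) || (p == j)) == ((q == i) || (q == j))
                 then 0 else g).

(** A point of R^8: the 8 edge weights of a pair (D, Db) of star trees. *)
Definition pt (R : realType) := ({ffun 'I_4 -> R} * {ffun 'I_4 -> R})%type.

Definition fiber (R : realType) (T : dmap R) (x : pt R) : Prop :=
  (forall p, 0 < x.1 p) /\ (forall p, 0 < x.2 p) /\
  forall p q, T p q = tmix (star_metric x.1) (star_metric x.2) p q.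

Definition swap_pt (R : realType) (x : pt R) : pt R := (x.2, x.1).

Definition relabel_w (R : realType) (pi : {perm 'I_4}) (w : {ffun 'I_4 -> R})
  : {ffun 'I_4 -> R} := [ffun p => w ((pi^-1)%g p)].
Definition relabel_pt (R : realType) (pi : {perm 'I_4}) (x : pt R) : pt R :=
  (relabel_w pi x.1, relabel_w pi x.2).

Definition aff_pt (R : realType) (x0 u v : pt R) (s t : R) : pt R :=
  ([ffun p => x0.1 p + s * u.1 p + t * v.1 p],
   [ffun p => x0.2 p + s * u.2 p + t * v.2 p]).

Definition in_region (R : realType) (cs : seq (R * R * R * bool)) (s t : R)
  : bool :=
  all (fun c : R * R * R * bool =>
         let: (a, b, d, strict) := c in
         if strict then a * s + b * t < d else a * s + b * t <= d) cs.

(** A 2-dimensional polygon in R^8: the image, under an injective affine map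
    R^2 -> R^8, of a bounded region of R^2 defined by finitely many (weak or
    strict) linear inequalities and containing three non-collinear points
    (so that it is genuinely 2-dimensional). Faces may be open or closed. *)
Definition polygon2 (R : realType) (P : pt R -> Prop) : Prop :=
  exists (x0 u v : pt R) (cs : seq (R * R * R * bool)),
    (forall a b : R, (forall p, a * u.1 p + b * v.1 p = 0 /\
                                a * u.2 p + b * v.2 p = 0) -> a = 0 /\ b = 0) /\
    (exists M : R, forall s t, in_region cs s t -> `|s| <= M /\ `|t| <= M) /\
    (exists s1 t1 s2 t2 s3 t3 : R,
        [/\ in_region cs s1 t1, in_region cs s2 t2, in_region cs s3 t3 &
            (s2 - s1) * (t3 - t1) - (s3 - s1) * (t2 - t1) != 0]) /\
    (forall x, P x <-> exists s t, in_region cs s t /\ x = aff_pt x0 u v s t).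

Definition fiber_decomp (R : realType) (T : dmap R) (I : finType)
    (F : I -> pt R -> Prop) : Prop :=
  [/\ (forall a, polygon2 (F a)),
      (forall (a b : I) (s t : bool), (a, s) != (b, t) -> forall x : pt R,
          ~ ((if s then F a (swap_pt x) else F a x) /\
             (if t then F b (swap_pt x) else F b x))),
      (forall x, fiber T x <-> exists a, F a x \/ F a (swap_pt x)) &
      (forall x, fiber T x -> swap_pt x <> x)].

(* Main.v *)
Require Import Defs.
From HB Require Import structures.
From mathcomp Require Import all_boot all_order all_algebra all_fingroup.
From mathcomp Require Import reals.
From mathcomp Require Import ring lra.
From Stdlib Require Import FunctionalExtensionality.
Import Order.TTheory GRing.Theory Num.Theory.
Local Open Scope ring_scope.
Set Implicit Arguments. Unset Strict Implicit. Unset Printing Implicit Defensive.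

Ltac splitall := repeat match goal with |- _ /\ _ => split end.
Ltac destall := repeat match goal with H : _ /\ _ |- _ => destruct H end.

Lemma max_eqP (R : realType) (A B c : R) :
  c = Num.max A B <-> [/\ A <= c, B <= c & (A = c \/ B = c)].
Proof.
split.
- case: (lerP A B) => h ->; split; try lra; first [by right | by left].
- case=> h1 h2 h3; case: (lerP A B) => h; case: h3; lra.
Qed.

Lemma uniq4E (i j k l : 'I_4) :
  uniq [:: i; j; k; l] = [&& i != j, i != k, i != l, j != k, j != l & k != l].
Proof. by rewrite /= !inE !negb_or !andbT -!andbA. Qed.

Lemma labsE (i j k l : 'I_4) : uniq [:: i; j; k; l] ->
  ((i == j) = false) * ((i == k) = false) * ((i == l) = false) *
  ((j == k) = false) * ((j == l) = false) * ((k == l) = false) *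
  ((j == i) = false) * ((k == i) = false) * ((l == i) = false) *
  ((k == j) = false) * ((l == j) = false) * ((l == k) = false).
Proof.
rewrite uniq4E => /and3P [h1 h2 /and4P [h3 h4 h5 h6]].
by rewrite !(negbTE h1, negbTE h2, negbTE h3, negbTE h4, negbTE h5, negbTE h6)
  ![j == i]eq_sym ![k == i]eq_sym ![l == i]eq_sym ![k == j]eq_sym
  ![l == j]eq_sym ![l == k]eq_sym
  !(negbTE h1, negbTE h2, negbTE h3, negbTE h4, negbTE h5, negbTE h6).
Qed.

Ltac slabs Hu := rewrite ?eqxx ?(labsE Hu) /=.

Lemma all4 (i j k l p : 'I_4) : uniq [:: i; j; k; l] ->
  [\/ p = i, p = j, p = k | p = l].
Proof.
move=> Hu.
have : p \in [:: i; j; k; l].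
  apply/negPn/negP => hp.
  have := @uniq_leq_size _ (p :: [:: i; j; k; l]) (enum 'I_4).
  rewrite size_enum_ord /= => H.
  have : (5 <= 4)%N.
    apply: H; first by rewrite /=; rewrite /= in hp Hu; rewrite hp.
    by move=> y; rewrite mem_enum.
  by [].
by rewrite !inE => /or4P [/eqP|/eqP|/eqP|/eqP] ->; [constructor 1|constructor 2|constructor 3|constructor 4].
Qed.

Definition FamR (R : realType) (ei ej ek el g wi wj wk wl vi vj vk vl : R)
  (m : nat) : Prop :=
  (0 < wi /\ 0 < wj /\ 0 < wk /\ 0 < wl /\ 0 < vi /\ 0 < vj /\ 0 < vk /\ 0 < vl) /\
  (wk - ek = g - (wi - ei) /\ wl - el = g - (wi - ei) /\
   vk - ek = g - (vj - ej) /\ vl - el = g - (vj - ej)) /\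
  match m with
  | O => wi - ei = g /\ wj - ej = - g /\ g <= vj - ej /\ vi - ei < - (vj - ej)
  | S O => wi - ei = g /\ vi - ei = - (vj - ej) /\ g <= vj - ej /\ wj - ej <= - g
  | S (S O) => vj - ej = g /\ vi - ei = - g /\ g < wi - ei /\ wj - ej < - (wi - ei)
  | _ => vj - ej = g /\ wj - ej = - (wi - ei) /\ g < wi - ei /\ vi - ei <= - g
  end.

Definition Fam (R : realType) (i j k l : 'I_4) (e : {ffun 'I_4 -> R}) (g : R)
  (m : 'I_4) (x : pt R) : Prop :=
  FamR (e i) (e j) (e k) (e l) g (x.1 i) (x.1 j) (x.1 k) (x.1 l)
       (x.2 i) (x.2 j) (x.2 k) (x.2 l) m.

Definition Six (R : realType) (ei ej ek el g wi wj wk wl vi vj vk vl : R) : Prop :=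
  (0 < wi /\ 0 < wj /\ 0 < wk /\ 0 < wl /\ 0 < vi /\ 0 < vj /\ 0 < vk /\ 0 < vl) /\
  (ei + ej + 0 = Num.max (wi + wj) (vi + vj) /\
   ek + el + 0 = Num.max (wk + wl) (vk + vl) /\
   ei + ek + g = Num.max (wi + wk) (vi + vk) /\
   ei + el + g = Num.max (wi + wl) (vi + vl) /\
   ej + ek + g = Num.max (wj + wk) (vj + vk) /\
   ej + el + g = Num.max (wj + wl) (vj + vl)).

Lemma fiber_Six (R : realType) (i j k l : 'I_4) (e : {ffun 'I_4 -> R}) g
  (x : pt R) : uniq [:: i; j; k; l] ->
  fiber (quartet_metric i j e g) x <->
  Six (e i) (e j) (e k) (e l) g (x.1 i) (x.1 j) (x.1 k) (x.1 l)
      (x.2 i) (x.2 j) (x.2 k) (x.2 l).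
Proof.
move=> Hu; rewrite /fiber /Six; split.
- case=> P1 [P2 H].
  have h1 := H i j; have h2 := H k l; have h3 := H i k;
  have h4 := H i l; have h5 := H j k; have h6 := H j l.
  rewrite /quartet_metric /tmix /star_metric in h1 h2 h3 h4 h5 h6.
  rewrite ?eqxx ?(labsE Hu) /= in h1 h2 h3 h4 h5 h6.
  by splitall; auto.
- move=> [P H]; destall; split; [|split].
  + by move=> p; case: (all4 p Hu) => ->.
  + by move=> p; case: (all4 p Hu) => ->.
  + move=> p q; case: (all4 p Hu) => ->; case: (all4 q Hu) => ->;
    rewrite /quartet_metric /tmix /star_metric; slabs Hu;
    first [ assumption
          | (rewrite [e _ + e _]addrC [x.1 _ + x.1 _]addrC [x.2 _ + x.2 _]addrC; assumption)
          | by rewrite maxxx ].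
Qed.

Lemma qm_swap (R : realType) (i j k l : 'I_4) (e : {ffun 'I_4 -> R}) g :
  uniq [:: i; j; k; l] -> quartet_metric k l e g = quartet_metric i j e g.
Proof.
move=> Hu; apply: functional_extensionality => p;
apply: functional_extensionality => q.
by case: (all4 p Hu) => ->; case: (all4 q Hu) => ->;
  rewrite /quartet_metric; slabs Hu.
Qed.

Lemma uniq_klij (i j k l : 'I_4) : uniq [:: i; j; k; l] -> uniq [:: k; l; i; j].
Proof.
rewrite !uniq4E => /and3P [h1 h2 /and4P [h3 h4 h5 h6]].
by rewrite h6 ![k == _]eq_sym ![l == _]eq_sym h2 h3 h4 h5 h1.
Qed.

Lemma swapK (R : realType) (x : pt R) : swap_pt (swap_pt x) = x.
Proof. by case: x. Qed.

Lemma fiber_swap (R : realType) (T : dmap R) (x : pt R) :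
  fiber T x -> fiber T (swap_pt x).
Proof.
case=> P1 [P2 H]; split; [|split] => //= p q; rewrite H /tmix; exact: maxC.
Qed.

Lemma fiber_noswap (R : realType) (i j k l : 'I_4) (e : {ffun 'I_4 -> R}) g
  (x : pt R) : uniq [:: i; j; k; l] -> 0 < g ->
  fiber (quartet_metric i j e g) x -> swap_pt x <> x.
Proof.
move=> Hu Hg /(fiber_Six _ _ _ Hu) [P [h1 [h2 [h3 [h4 [h5 h6]]]]]].
case: x P h1 h2 h3 h4 h5 h6 => w v /= P h1 h2 h3 h4 h5 h6 [E1 E2].
rewrite E1 !maxxx in h1 h2 h3 h4 h5 h6; lra.
Qed.

Ltac fin m := exists (@Ordinal 4 m isT); rewrite /FamR /=; splitall; lra.

Lemma center (R : realType) (ei ej ek el g wi wj wk wl vi vj vk vl : R) :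
  0 < g -> 0 < wi -> 0 < wj -> 0 < wk -> 0 < wl -> 0 < vi -> 0 < vj ->
  0 < vk -> 0 < vl ->
  wi + wk = ei + ek + g -> wi + wl = ei + el + g ->
  vj + vk = ej + ek + g -> vj + vl = ej + el + g ->
  wi + wj <= ei + ej -> vi + vj <= ei + ej ->
  wk + wl <= ek + el -> vk + vl <= ek + el ->
  (wi + wj = ei + ej \/ vi + vj = ei + ej) ->
  (wk + wl = ek + el \/ vk + vl = ek + el) ->
  exists m : 'I_4, FamR ei ej ek el g wi wj wk wl vi vj vk vl m.
Proof.
move=> Hg ? ? ? ? ? ? ? ? h1 h2 h3 h4 h5 h6 h7 h8 Hij Hkl.
case: (lerP (wi - ei) g) => ha.
- case: (ltrP (vi - ei + (vj - ej)) 0) => hb.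
  + case: Hij => ?; [fin 0%N | exfalso; lra].
  + fin 1%N.
- case: Hkl => ?; first (exfalso; lra).
  case: (ltrP (wj - ej + (wi - ei)) 0) => hc.
  + case: Hij => ?; [exfalso; lra | fin 2%N].
  + fin 3%N.
Qed.

Ltac ctr o1 o2 := apply: center; try assumption; try lra;
  try (by case: o1 => ?; [left|right]; lra);
  try (by case: o1 => ?; [right|left]; lra);
  try (by case: o2 => ?; [left|right]; lra);
  try (by case: o2 => ?; [right|left]; lra).

Lemma classify (R : realType) (ei ej ek el g wi wj wk wl vi vj vk vl : R) :
  0 < g -> Six ei ej ek el g wi wj wk wl vi vj vk vl ->
  (exists m : 'I_4, FamR ei ej ek el g wi wj wk wl vi vj vk vl m) \/
  (exists m : 'I_4, FamR ei ej ek el g vi vj vk vl wi wj wk wl m) \/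
  (exists m : 'I_4, FamR ek el ei ej g wk wl wi wj vk vl vi vj m) \/
  (exists m : 'I_4, FamR ek el ei ej g vk vl vi vj wk wl wi wj m).
Proof.
move=> Hg [P [F1 [F2 [F3 [F4 [F5 F6]]]]]]; destall.
move/max_eqP: F1 => [a1 b1 o1]; move/max_eqP: F2 => [a2 b2 o2].
move/max_eqP: F3 => [a3 b3 o3]; move/max_eqP: F4 => [a4 b4 o4].
move/max_eqP: F5 => [a5 b5 o5]; move/max_eqP: F6 => [a6 b6 o6].
case: o3 => o3; case: o4 => o4; case: o5 => o5; case: o6 => o6;
  try (exfalso; lra).
- left; ctr o1 o2.
- right; right; left; ctr o1 o2.
- right; right; right; ctr o1 o2.
- right; left; ctr o1 o2.
Qed.

Lemma FamR_core (R : realType) (ei ej ek el g wi wj wk wl vi vj vk vl : R) m :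
  FamR ei ej ek el g wi wj wk wl vi vj vk vl m ->
  wi - ei + (wk - ek) = g /\ wi - ei + (wl - el) = g /\
  vj - ej + (vk - ek) = g /\ vj - ej + (vl - el) = g /\
  wi - ei + (wj - ej) <= 0 /\ wk - ek + (wl - el) <= 0 /\
  vi - ei + (vj - ej) <= 0 /\ vk - ek + (vl - el) <= 0.
Proof.
by rewrite /FamR; case: m => [|[|[|m]]] /= H; destall; splitall; lra.
Qed.

Ltac maxg := apply/max_eqP; split; [lra|lra|first [left; lra | right; lra]].

Lemma FamR_Six (R : realType) (ei ej ek el g wi wj wk wl vi vj vk vl : R) m :
  0 < g -> FamR ei ej ek el g wi wj wk wl vi vj vk vl m ->
  Six ei ej ek el g wi wj wk wl vi vj vk vl.
Proof.
move=> Hg; rewrite /FamR; case: m => [|[|[|m]]] /= H; destall; split;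
  (splitall; [assumption|assumption|assumption|assumption|assumption|assumption|assumption|assumption|..]) || splitall;
  try assumption; maxg.
Qed.

Lemma FamR_D1 (R : realType) (ei ej ek el g wi wj wk wl vi vj vk vl : R)
  (m m' : 'I_4) :
  FamR ei ej ek el g wi wj wk wl vi vj vk vl m ->
  FamR ei ej ek el g wi wj wk wl vi vj vk vl m' -> m = m'.
Proof.
move=> H1 H2; apply: val_inj; move: H1 H2; rewrite /FamR.
case: m => [[|[|[|[|n]]]] Hm] //; case: m' => [[|[|[|[|n']]]] Hm'] //= H1 H2;
  destall; exfalso; lra.
Qed.

Lemma FamR_ne (R : realType) (ei ej ek el g wi wj wk wl vi vj vk vl : R) m :
  0 < g -> FamR ei ej ek el g wi wj wk wl vi vj vk vl m -> g < ei /\ g < ej.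
Proof. by move=> Hg; rewrite /FamR; case: m => [|[|[|m]]] /= H; destall; split; lra. Qed.

Lemma Fam_fiber (R : realType) (i j k l : 'I_4) (e : {ffun 'I_4 -> R}) g m
  (x : pt R) : uniq [:: i; j; k; l] -> 0 < g -> Fam i j k l e g m x ->
  fiber (quartet_metric i j e g) x.
Proof. by move=> Hu Hg H; apply/(fiber_Six _ _ _ Hu); exact: FamR_Six H. Qed.

Lemma Fam_fiber' (R : realType) (i j k l : 'I_4) (e : {ffun 'I_4 -> R}) g m
  (x : pt R) : uniq [:: i; j; k; l] -> 0 < g -> Fam k l i j e g m x ->
  fiber (quartet_metric i j e g) x.
Proof.
move=> Hu Hg H; rewrite -(qm_swap e g Hu).
exact: Fam_fiber (uniq_klij Hu) Hg H.
Qed.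

Lemma Fam_equiv (R : realType) (pi : {perm 'I_4}) i j k l e g m (x : pt R) :
  Fam (pi i) (pi j) (pi k) (pi l) (relabel_w pi e) g m x <->
  exists y, Fam i j k l e g m y /\ x = relabel_pt pi y.
Proof.
have He (w : {ffun 'I_4 -> R}) p : relabel_w pi w (pi p) = w p.
  by rewrite /relabel_w ffunE permK.
rewrite /Fam !He; split.
- move=> H; exists (relabel_pt (pi^-1)%g x); split.
  + by rewrite /relabel_pt /relabel_w /= !ffunE !invgK.
  + case: x H => w v H; rewrite /relabel_pt /relabel_w /=.
    by congr pair; apply/ffunP => p; rewrite !ffunE invgK permKV.
- by case=> y [H ->]; rewrite /relabel_pt /= !He.
Qed.

Definition mk (R : realType) (i j k l : 'I_4) (a b c d : R) : {ffun 'I_4 -> R} :=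
  [ffun p => if p == i then a else if p == j then b else if p == k then c else d].
Arguments mk : simpl never.

Lemma mkE (R : realType) (i j k l : 'I_4) (a b c d : R) : uniq [:: i; j; k; l] ->
  (mk i j k l a b c d i = a) * (mk i j k l a b c d j = b) *
  (mk i j k l a b c d k = c) * (mk i j k l a b c d l = d).
Proof. by move=> Hu; rewrite /mk !ffunE; slabs Hu. Qed.

Lemma ffun4 (R : realType) (i j k l : 'I_4) (f f' : {ffun 'I_4 -> R}) :
  uniq [:: i; j; k; l] ->
  f i = f' i -> f j = f' j -> f k = f' k -> f l = f' l -> f = f'.
Proof.
move=> Hu h1 h2 h3 h4; apply/ffunP => p; by case: (all4 p Hu) => ->.
Qed.

Lemma small (R : realType) (a b c d : R) : 0 < a -> 0 < b -> 0 < c -> 0 < d ->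
  exists q : R, [/\ 0 < q, 4 * q <= a, 4 * q <= b & 4 * q <= c /\ 4 * q <= d].
Proof.
move=> ha hb hc hd.
pose h := Num.min (Num.min a b) (Num.min c d).
have h1 : h <= a by rewrite /h !ge_min lexx.
have h2 : h <= b by rewrite /h !ge_min lexx !orbT.
have h3 : h <= c by rewrite /h !ge_min lexx !orbT.
have h4 : h <= d by rewrite /h !ge_min lexx !orbT.
have h0 : 0 < h by rewrite /h !lt_min ha hb hc hd.
exists (h / 4); split; try split; lra.
Qed.

Ltac breg := repeat match goal with H : is_true (_ && _) |- _ => case/andP: H => ? H end.
Ltac simpH Hu := rewrite /aff_pt /mk /= !ffunE; slabs Hu.

Definition cs0 (R : realType) (ei ej ek el g : R) : seq (R * R * R * bool) :=
  [:: (-1, 0, - g, false);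
      (1, 1, 0, true);
      (0, 0, ei + g, true);
      (0, 0, ej - g, true);
      (0, 0, ek, true);
      (0, 0, el, true);
      (0, -1, ei, true);
      (-1, 0, ej, true);
      (1, 0, ek + g, true);
      (1, 0, el + g, true)].

Lemma fwd0 (R : realType) (ei ej ek el g wi wj wk wl vi vj vk vl : R) : 0 < g ->
  FamR ei ej ek el g wi wj wk wl vi vj vk vl 0 ->
  in_region (cs0 ei ej ek el g) (vj - ej) (vi - ei) /\
  wi = (ei + g) /\ wj = (ej - g) /\ wk = (ek) /\ wl = (el) /\ vi = (ei) + (vi - ei) /\ vj = (ej) + (vj - ej) /\ vk = (ek + g) - (vj - ej) /\ vl = (el + g) - (vj - ej).
Proof.
rewrite /FamR /= => Hg H; destall; split.
  rewrite /in_region /= !andbT; repeat (apply/andP; split); lra.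
splitall; lra.
Qed.

Lemma bwd0 (R : realType) (ei ej ek el g wi wj wk wl vi vj vk vl : R) (s t : R) : 0 < g ->
  in_region (cs0 ei ej ek el g) s t ->
  wi = (ei + g) -> wj = (ej - g) -> wk = (ek) -> wl = (el) -> vi = (ei) + t -> vj = (ej) + s -> vk = (ek + g) - s -> vl = (el + g) - s ->
  FamR ei ej ek el g wi wj wk wl vi vj vk vl 0.
Proof.
rewrite /in_region /= => Hg Hr; breg; move=> h1 h2 h3 h4 h5 h6 h7 h8.
rewrite /FamR /=; splitall; lra.
Qed.

Lemma bnd0 (R : realType) (ei ej ek el g : R) (s t : R) : 0 < g ->
  0 < ei -> 0 < ej -> 0 < ek -> 0 < el ->
  in_region (cs0 ei ej ek el g) s t ->
  `|s| <= ei + ej + ek + el + g /\ `|t| <= ei + ej + ek + el + g.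
Proof.
rewrite /in_region /= => Hg h1 h2 h3 h4 Hr; breg.
rewrite !ler_norml; split; apply/andP; split; lra.
Qed.

Lemma pts0 (R : realType) (ei ej ek el g : R) : 0 < g ->
  g < ei -> g < ej -> 0 < ek -> 0 < el ->
  exists s1 t1 s2 t2 s3 t3 : R,
    [/\ in_region (cs0 ei ej ek el g) s1 t1, in_region (cs0 ei ej ek el g) s2 t2,
         in_region (cs0 ei ej ek el g) s3 t3 &
         (s2 - s1) * (t3 - t1) - (s3 - s1) * (t2 - t1) != 0].
Proof.
move=> Hg hi hj hk hl.
have [q [hq q1 q2 [q3 q4]]] := @small R (ei - g) (ej - g) ek el
  ltac:(lra) ltac:(lra) hk hl.
exists (g), (- g - 2 * q), (g + q), (- g - 2 * q), (g), (- g - q); split;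
  try (rewrite /in_region /= !andbT; repeat (apply/andP; split); lra).
have -> : ((g + q) - (g)) * ((- g - q) - (- g - 2 * q)) - ((g) - (g)) * ((- g - 2 * q) - (- g - 2 * q)) = q * q by ring.
by apply: lt0r_neq0; exact: mulr_gt0.
Qed.

Definition cs1 (R : realType) (ei ej ek el g : R) : seq (R * R * R * bool) :=
  [:: (-1, 0, - g, false);
      (0, 1, - g, false);
      (0, 0, ei + g, true);
      (0, -1, ej, true);
      (0, 0, ek, true);
      (0, 0, el, true);
      (1, 0, ei, true);
      (-1, 0, ej, true);
      (1, 0, ek + g, true);
      (1, 0, el + g, true)].

Lemma fwd1 (R : realType) (ei ej ek el g wi wj wk wl vi vj vk vl : R) : 0 < g ->
  FamR ei ej ek el g wi wj wk wl vi vj vk vl 1 ->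
  in_region (cs1 ei ej ek el g) (vj - ej) (wj - ej) /\
  wi = (ei + g) /\ wj = (ej) + (wj - ej) /\ wk = (ek) /\ wl = (el) /\ vi = (ei) - (vj - ej) /\ vj = (ej) + (vj - ej) /\ vk = (ek + g) - (vj - ej) /\ vl = (el + g) - (vj - ej).
Proof.
rewrite /FamR /= => Hg H; destall; split.
  rewrite /in_region /= !andbT; repeat (apply/andP; split); lra.
splitall; lra.
Qed.

Lemma bwd1 (R : realType) (ei ej ek el g wi wj wk wl vi vj vk vl : R) (s t : R) : 0 < g ->
  in_region (cs1 ei ej ek el g) s t ->
  wi = (ei + g) -> wj = (ej) + t -> wk = (ek) -> wl = (el) -> vi = (ei) - s -> vj = (ej) + s -> vk = (ek + g) - s -> vl = (el + g) - s ->
  FamR ei ej ek el g wi wj wk wl vi vj vk vl 1.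
Proof.
rewrite /in_region /= => Hg Hr; breg; move=> h1 h2 h3 h4 h5 h6 h7 h8.
rewrite /FamR /=; splitall; lra.
Qed.

Lemma bnd1 (R : realType) (ei ej ek el g : R) (s t : R) : 0 < g ->
  0 < ei -> 0 < ej -> 0 < ek -> 0 < el ->
  in_region (cs1 ei ej ek el g) s t ->
  `|s| <= ei + ej + ek + el + g /\ `|t| <= ei + ej + ek + el + g.
Proof.
rewrite /in_region /= => Hg h1 h2 h3 h4 Hr; breg.
rewrite !ler_norml; split; apply/andP; split; lra.
Qed.

Lemma pts1 (R : realType) (ei ej ek el g : R) : 0 < g ->
  g < ei -> g < ej -> 0 < ek -> 0 < el ->
  exists s1 t1 s2 t2 s3 t3 : R,
    [/\ in_region (cs1 ei ej ek el g) s1 t1, in_region (cs1 ei ej ek el g) s2 t2,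
         in_region (cs1 ei ej ek el g) s3 t3 &
         (s2 - s1) * (t3 - t1) - (s3 - s1) * (t2 - t1) != 0].
Proof.
move=> Hg hi hj hk hl.
have [q [hq q1 q2 [q3 q4]]] := @small R (ei - g) (ej - g) ek el
  ltac:(lra) ltac:(lra) hk hl.
exists (g), (- g - 2 * q), (g + q), (- g - 2 * q), (g), (- g - q); split;
  try (rewrite /in_region /= !andbT; repeat (apply/andP; split); lra).
have -> : ((g + q) - (g)) * ((- g - q) - (- g - 2 * q)) - ((g) - (g)) * ((- g - 2 * q) - (- g - 2 * q)) = q * q by ring.
by apply: lt0r_neq0; exact: mulr_gt0.
Qed.

Definition cs2 (R : realType) (ei ej ek el g : R) : seq (R * R * R * bool) :=
  [:: (-1, 0, - g, true);
      (1, 1, 0, true);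
      (-1, 0, ei, true);
      (0, -1, ej, true);
      (1, 0, ek + g, true);
      (1, 0, el + g, true);
      (0, 0, ei - g, true);
      (0, 0, ej + g, true);
      (0, 0, ek, true);
      (0, 0, el, true)].

Lemma fwd2 (R : realType) (ei ej ek el g wi wj wk wl vi vj vk vl : R) : 0 < g ->
  FamR ei ej ek el g wi wj wk wl vi vj vk vl 2 ->
  in_region (cs2 ei ej ek el g) (wi - ei) (wj - ej) /\
  wi = (ei) + (wi - ei) /\ wj = (ej) + (wj - ej) /\ wk = (ek + g) - (wi - ei) /\ wl = (el + g) - (wi - ei) /\ vi = (ei - g) /\ vj = (ej + g) /\ vk = (ek) /\ vl = (el).
Proof.
rewrite /FamR /= => Hg H; destall; split.
  rewrite /in_region /= !andbT; repeat (apply/andP; split); lra.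
splitall; lra.
Qed.

Lemma bwd2 (R : realType) (ei ej ek el g wi wj wk wl vi vj vk vl : R) (s t : R) : 0 < g ->
  in_region (cs2 ei ej ek el g) s t ->
  wi = (ei) + s -> wj = (ej) + t -> wk = (ek + g) - s -> wl = (el + g) - s -> vi = (ei - g) -> vj = (ej + g) -> vk = (ek) -> vl = (el) ->
  FamR ei ej ek el g wi wj wk wl vi vj vk vl 2.
Proof.
rewrite /in_region /= => Hg Hr; breg; move=> h1 h2 h3 h4 h5 h6 h7 h8.
rewrite /FamR /=; splitall; lra.
Qed.

Lemma bnd2 (R : realType) (ei ej ek el g : R) (s t : R) : 0 < g ->
  0 < ei -> 0 < ej -> 0 < ek -> 0 < el ->
  in_region (cs2 ei ej ek el g) s t ->
  `|s| <= ei + ej + ek + el + g /\ `|t| <= ei + ej + ek + el + g.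
Proof.
rewrite /in_region /= => Hg h1 h2 h3 h4 Hr; breg.
rewrite !ler_norml; split; apply/andP; split; lra.
Qed.

Lemma pts2 (R : realType) (ei ej ek el g : R) : 0 < g ->
  g < ei -> g < ej -> 0 < ek -> 0 < el ->
  exists s1 t1 s2 t2 s3 t3 : R,
    [/\ in_region (cs2 ei ej ek el g) s1 t1, in_region (cs2 ei ej ek el g) s2 t2,
         in_region (cs2 ei ej ek el g) s3 t3 &
         (s2 - s1) * (t3 - t1) - (s3 - s1) * (t2 - t1) != 0].
Proof.
move=> Hg hi hj hk hl.
have [q [hq q1 q2 [q3 q4]]] := @small R (ei - g) (ej - g) ek el
  ltac:(lra) ltac:(lra) hk hl.
exists (g + q), (- g - 3 * q), (g + 2 * q), (- g - 3 * q), (g + q), (- g - 2 * q); split;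
  try (rewrite /in_region /= !andbT; repeat (apply/andP; split); lra).
have -> : ((g + 2 * q) - (g + q)) * ((- g - 2 * q) - (- g - 3 * q)) - ((g + q) - (g + q)) * ((- g - 3 * q) - (- g - 3 * q)) = q * q by ring.
by apply: lt0r_neq0; exact: mulr_gt0.
Qed.

Definition cs3 (R : realType) (ei ej ek el g : R) : seq (R * R * R * bool) :=
  [:: (-1, 0, - g, true);
      (0, 1, - g, false);
      (-1, 0, ei, true);
      (1, 0, ej, true);
      (1, 0, ek + g, true);
      (1, 0, el + g, true);
      (0, -1, ei, true);
      (0, 0, ej + g, true);
      (0, 0, ek, true);
      (0, 0, el, true)].

Lemma fwd3 (R : realType) (ei ej ek el g wi wj wk wl vi vj vk vl : R) : 0 < g ->
  FamR ei ej ek el g wi wj wk wl vi vj vk vl 3 ->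
  in_region (cs3 ei ej ek el g) (wi - ei) (vi - ei) /\
  wi = (ei) + (wi - ei) /\ wj = (ej) - (wi - ei) /\ wk = (ek + g) - (wi - ei) /\ wl = (el + g) - (wi - ei) /\ vi = (ei) + (vi - ei) /\ vj = (ej + g) /\ vk = (ek) /\ vl = (el).
Proof.
rewrite /FamR /= => Hg H; destall; split.
  rewrite /in_region /= !andbT; repeat (apply/andP; split); lra.
splitall; lra.
Qed.

Lemma bwd3 (R : realType) (ei ej ek el g wi wj wk wl vi vj vk vl : R) (s t : R) : 0 < g ->
  in_region (cs3 ei ej ek el g) s t ->
  wi = (ei) + s -> wj = (ej) - s -> wk = (ek + g) - s -> wl = (el + g) - s -> vi = (ei) + t -> vj = (ej + g) -> vk = (ek) -> vl = (el) ->
  FamR ei ej ek el g wi wj wk wl vi vj vk vl 3.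
Proof.
rewrite /in_region /= => Hg Hr; breg; move=> h1 h2 h3 h4 h5 h6 h7 h8.
rewrite /FamR /=; splitall; lra.
Qed.

Lemma bnd3 (R : realType) (ei ej ek el g : R) (s t : R) : 0 < g ->
  0 < ei -> 0 < ej -> 0 < ek -> 0 < el ->
  in_region (cs3 ei ej ek el g) s t ->
  `|s| <= ei + ej + ek + el + g /\ `|t| <= ei + ej + ek + el + g.
Proof.
rewrite /in_region /= => Hg h1 h2 h3 h4 Hr; breg.
rewrite !ler_norml; split; apply/andP; split; lra.
Qed.

Lemma pts3 (R : realType) (ei ej ek el g : R) : 0 < g ->
  g < ei -> g < ej -> 0 < ek -> 0 < el ->
  exists s1 t1 s2 t2 s3 t3 : R,
    [/\ in_region (cs3 ei ej ek el g) s1 t1, in_region (cs3 ei ej ek el g) s2 t2,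
         in_region (cs3 ei ej ek el g) s3 t3 &
         (s2 - s1) * (t3 - t1) - (s3 - s1) * (t2 - t1) != 0].
Proof.
move=> Hg hi hj hk hl.
have [q [hq q1 q2 [q3 q4]]] := @small R (ei - g) (ej - g) ek el
  ltac:(lra) ltac:(lra) hk hl.
exists (g + q), (- g - 2 * q), (g + 2 * q), (- g - 2 * q), (g + q), (- g - q); split;
  try (rewrite /in_region /= !andbT; repeat (apply/andP; split); lra).
have -> : ((g + 2 * q) - (g + q)) * ((- g - q) - (- g - 2 * q)) - ((g + q) - (g + q)) * ((- g - 2 * q) - (- g - 2 * q)) = q * q by ring.
by apply: lt0r_neq0; exact: mulr_gt0.
Qed.
Lemma Fam_poly (R : realType) (i j k l : 'I_4) (e : {ffun 'I_4 -> R}) g m :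
  uniq [:: i; j; k; l] -> (forall p, 0 < e p) -> 0 < g -> g < e i -> g < e j ->
  polygon2 (Fam i j k l e g m).
Proof.
move=> Hu He Hg hi hj.
case: m => [[|[|[|[|n]]]] Hm] //.
- exists (mk i j k l ((e i) + g) ((e j) - g) ((e k)) ((e l)), mk i j k l ((e i)) ((e j)) ((e k) + g) ((e l) + g)), (mk i j k l (0) (0) (0) (0), mk i j k l (0) (1) (-1) (-1)), (mk i j k l (0) (0) (0) (0), mk i j k l (1) (0) (0) (0)), (cs0 (e i) (e j) (e k) (e l) g).
  split.
    intros a b H; move: (H i) (H j) (H k) (H l); simpH Hu;
    move=> H1 H2 H3 H4; destall; split; lra.
  split.
    exists (e i + e j + e k + e l + g); intros s t Hr.
    exact: (bnd0 Hg (He i) (He j) (He k) (He l) Hr).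
  split; first exact: (pts0 Hg hi hj (He k) (He l)).
  intros x; split.
  + rewrite /Fam => H; have [Hreg Heq] := fwd0 Hg H.
    case: Heq => h1 [h2 [h3 [h4 [h5 [h6 [h7 h8]]]]]].
    exists (x.2 j - (e j)), (x.2 i - (e i)); split; first exact: Hreg.
    apply: injective_projections => /=; apply: (ffun4 Hu); simpH Hu;
    first [rewrite {1}h1; ring | rewrite {1}h2; ring | rewrite {1}h3; ring |
           rewrite {1}h4; ring | rewrite {1}h5; ring | rewrite {1}h6; ring |
           rewrite {1}h7; ring | rewrite {1}h8; ring].
  + intros [s [t [Hr ->]]]; rewrite /Fam; simpH Hu.
    by apply: (bwd0 Hg Hr); ring.
- exists (mk i j k l ((e i) + g) ((e j)) ((e k)) ((e l)), mk i j k l ((e i)) ((e j)) ((e k) + g) ((e l) + g)), (mk i j k l (0) (0) (0) (0), mk i j k l (-1) (1) (-1) (-1)), (mk i j k l (0) (1) (0) (0), mk i j k l (0) (0) (0) (0)), (cs1 (e i) (e j) (e k) (e l) g).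
  split.
    intros a b H; move: (H i) (H j) (H k) (H l); simpH Hu;
    move=> H1 H2 H3 H4; destall; split; lra.
  split.
    exists (e i + e j + e k + e l + g); intros s t Hr.
    exact: (bnd1 Hg (He i) (He j) (He k) (He l) Hr).
  split; first exact: (pts1 Hg hi hj (He k) (He l)).
  intros x; split.
  + rewrite /Fam => H; have [Hreg Heq] := fwd1 Hg H.
    case: Heq => h1 [h2 [h3 [h4 [h5 [h6 [h7 h8]]]]]].
    exists (x.2 j - (e j)), (x.1 j - (e j)); split; first exact: Hreg.
    apply: injective_projections => /=; apply: (ffun4 Hu); simpH Hu;
    first [rewrite {1}h1; ring | rewrite {1}h2; ring | rewrite {1}h3; ring |
           rewrite {1}h4; ring | rewrite {1}h5; ring | rewrite {1}h6; ring |
           rewrite {1}h7; ring | rewrite {1}h8; ring].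
  + intros [s [t [Hr ->]]]; rewrite /Fam; simpH Hu.
    by apply: (bwd1 Hg Hr); ring.
- exists (mk i j k l ((e i)) ((e j)) ((e k) + g) ((e l) + g), mk i j k l ((e i) - g) ((e j) + g) ((e k)) ((e l))), (mk i j k l (1) (0) (-1) (-1), mk i j k l (0) (0) (0) (0)), (mk i j k l (0) (1) (0) (0), mk i j k l (0) (0) (0) (0)), (cs2 (e i) (e j) (e k) (e l) g).
  split.
    intros a b H; move: (H i) (H j) (H k) (H l); simpH Hu;
    move=> H1 H2 H3 H4; destall; split; lra.
  split.
    exists (e i + e j + e k + e l + g); intros s t Hr.
    exact: (bnd2 Hg (He i) (He j) (He k) (He l) Hr).
  split; first exact: (pts2 Hg hi hj (He k) (He l)).
  intros x; split.
  + rewrite /Fam => H; have [Hreg Heq] := fwd2 Hg H.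
    case: Heq => h1 [h2 [h3 [h4 [h5 [h6 [h7 h8]]]]]].
    exists (x.1 i - (e i)), (x.1 j - (e j)); split; first exact: Hreg.
    apply: injective_projections => /=; apply: (ffun4 Hu); simpH Hu;
    first [rewrite {1}h1; ring | rewrite {1}h2; ring | rewrite {1}h3; ring |
           rewrite {1}h4; ring | rewrite {1}h5; ring | rewrite {1}h6; ring |
           rewrite {1}h7; ring | rewrite {1}h8; ring].
  + intros [s [t [Hr ->]]]; rewrite /Fam; simpH Hu.
    by apply: (bwd2 Hg Hr); ring.
- exists (mk i j k l ((e i)) ((e j)) ((e k) + g) ((e l) + g), mk i j k l ((e i)) ((e j) + g) ((e k)) ((e l))), (mk i j k l (1) (-1) (-1) (-1), mk i j k l (0) (0) (0) (0)), (mk i j k l (0) (0) (0) (0), mk i j k l (1) (0) (0) (0)), (cs3 (e i) (e j) (e k) (e l) g).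
  split.
    intros a b H; move: (H i) (H j) (H k) (H l); simpH Hu;
    move=> H1 H2 H3 H4; destall; split; lra.
  split.
    exists (e i + e j + e k + e l + g); intros s t Hr.
    exact: (bnd3 Hg (He i) (He j) (He k) (He l) Hr).
  split; first exact: (pts3 Hg hi hj (He k) (He l)).
  intros x; split.
  + rewrite /Fam => H; have [Hreg Heq] := fwd3 Hg H.
    case: Heq => h1 [h2 [h3 [h4 [h5 [h6 [h7 h8]]]]]].
    exists (x.1 i - (e i)), (x.2 i - (e i)); split; first exact: Hreg.
    apply: injective_projections => /=; apply: (ffun4 Hu); simpH Hu;
    first [rewrite {1}h1; ring | rewrite {1}h2; ring | rewrite {1}h3; ring |
           rewrite {1}h4; ring | rewrite {1}h5; ring | rewrite {1}h6; ring |
           rewrite {1}h7; ring | rewrite {1}h8; ring].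
  + intros [s [t [Hr ->]]]; rewrite /Fam; simpH Hu.
    by apply: (bwd3 Hg Hr); ring.
Qed.

Lemma decomp_gen (R : realType) (I : finType) (F : I -> pt R -> Prop) (T : dmap R) :
  (forall a, polygon2 (F a)) ->
  (forall a b x, F a x -> F b x -> a = b) ->
  (forall a b x, F a x -> F b (swap_pt x) -> False) ->
  (forall x, fiber T x <-> exists a, F a x \/ F a (swap_pt x)) ->
  (forall x, fiber T x -> swap_pt x <> x) ->
  fiber_decomp T F.
Proof.
move=> P D1 D2 Fi Ns; split => //.
move=> a b [] [] Hne x [H1 H2].
- have Eab := D1 _ _ _ H1 H2; subst; by rewrite eqxx in Hne.
- exact: D2 b a x H2 H1.
- exact: D2 a b x H1 H2.
- have Eab := D1 _ _ _ H1 H2; subst; by rewrite eqxx in Hne.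
Qed.

Lemma FD2 (R : realType) (i j k l : 'I_4) (e : {ffun 'I_4 -> R}) g m m' (x : pt R) :
  0 < g -> Fam i j k l e g m x -> Fam i j k l e g m' (swap_pt x) -> False.
Proof.
move=> Hg H1 H2; have := FamR_core H1; have := FamR_core H2; rewrite /=.
move=> c1 c2; destall; lra.
Qed.

Lemma FD3 (R : realType) (i j k l : 'I_4) (e : {ffun 'I_4 -> R}) g m m' (x : pt R) :
  0 < g -> Fam i j k l e g m x -> Fam k l i j e g m' x -> False.
Proof.
move=> Hg H1 H2; have := FamR_core H1; have := FamR_core H2; rewrite /=.
move=> c1 c2; destall; lra.
Qed.

Lemma FD4 (R : realType) (i j k l : 'I_4) (e : {ffun 'I_4 -> R}) g m m' (x : pt R) :
  0 < g -> Fam i j k l e g m x -> Fam k l i j e g m' (swap_pt x) -> False.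
Proof.
move=> Hg H1 H2; have := FamR_core H1; have := FamR_core H2; rewrite /=.
move=> c1 c2; destall; lra.
Qed.

Lemma classifyF (R : realType) (i j k l : 'I_4) (e : {ffun 'I_4 -> R}) g (x : pt R) :
  uniq [:: i; j; k; l] -> 0 < g -> fiber (quartet_metric i j e g) x ->
  (exists m, Fam i j k l e g m x) \/ (exists m, Fam i j k l e g m (swap_pt x)) \/
  (exists m, Fam k l i j e g m x) \/ (exists m, Fam k l i j e g m (swap_pt x)).
Proof.
move=> Hu Hg /(fiber_Six _ _ _ Hu) H.
exact: (classify Hg H).
Qed.

Lemma Fam_ne (R : realType) (i j k l : 'I_4) (e : {ffun 'I_4 -> R}) g m (x : pt R) :
  0 < g -> Fam i j k l e g m x -> g < e i /\ g < e j.
Proof. by move=> Hg H; exact: FamR_ne Hg H. Qed.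

Lemma decomp1 (R : realType) (i j k l : 'I_4) (e : {ffun 'I_4 -> R}) g :
  uniq [:: i; j; k; l] -> (forall p, 0 < e p) -> 0 < g -> g < e i -> g < e j ->
  ~ (g < e k /\ g < e l) ->
  fiber_decomp (quartet_metric i j e g) (Fam i j k l e g).
Proof.
move=> Hu He Hg hi hj hn; apply: decomp_gen.
- by move=> a; apply: Fam_poly.
- by move=> a b x H1 H2; exact: FamR_D1 H1 H2.
- by move=> a b x H1 H2; exact: FD2 Hg H1 H2.
- move=> x; split.
  + case/(classifyF Hu Hg) => [[m H]|[[m H]|[[m H]|[m H]]]].
    * by exists m; left.
    * by exists m; right.
    * by exfalso; apply: hn; exact: Fam_ne Hg H.
    * by exfalso; apply: hn; exact: Fam_ne Hg H.
  + case=> a [H|H]; first exact: Fam_fiber Hu Hg H.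
    rewrite -(swapK x); apply: fiber_swap; exact: Fam_fiber Hu Hg H.
- by move=> x; apply: fiber_noswap Hu Hg.
Qed.

Lemma decomp2 (R : realType) (i j k l : 'I_4) (e : {ffun 'I_4 -> R}) g :
  uniq [:: i; j; k; l] -> (forall p, 0 < e p) -> 0 < g -> g < e i -> g < e j ->
  g < e k -> g < e l ->
  fiber_decomp (quartet_metric i j e g) (fun bm : bool * 'I_4 =>
           if bm.1 then Fam i j k l e g bm.2 else Fam k l i j e g bm.2).
Proof.
move=> Hu He Hg hi hj hk hl; apply: decomp_gen.
- case=> [[] m] /=; apply: Fam_poly => //; exact: uniq_klij.
- case=> [[] ma] [[] mb] x /= H1 H2.
  + by rewrite (FamR_D1 H1 H2).
  + by exfalso; exact: FD3 Hg H1 H2.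
  + by exfalso; exact: FD3 Hg H2 H1.
  + by rewrite (FamR_D1 H1 H2).
- case=> [[] ma] [[] mb] x /= H1 H2.
  + exact: FD2 Hg H1 H2.
  + exact: FD4 Hg H1 H2.
  + by apply: (FD4 (m' := ma) Hg H2); rewrite swapK.
  + exact: FD2 Hg H1 H2.
- move=> x; split.
  + case/(classifyF Hu Hg) => [[m H]|[[m H]|[[m H]|[m H]]]].
    * by exists (true, m); left.
    * by exists (true, m); right.
    * by exists (false, m); left.
    * by exists (false, m); right.
  + case=> [[[] m]] /= [H|H].
    * exact: Fam_fiber Hu Hg H.
    * rewrite -(swapK x); apply: fiber_swap; exact: Fam_fiber Hu Hg H.
    * exact: Fam_fiber' Hu Hg H.
    * rewrite -(swapK x); apply: fiber_swap; exact: Fam_fiber' Hu Hg H.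
- by move=> x; apply: fiber_noswap Hu Hg.
Qed.

Lemma witness (R : realType) (i j k l : 'I_4) (e : {ffun 'I_4 -> R}) g :
  uniq [:: i; j; k; l] -> (forall p, 0 < e p) -> 0 < g -> g < e i -> g < e j ->
  exists m x, Fam i j k l e g m x.
Proof.
move=> Hu He Hg hi hj.
have hk := He k; have hl := He l.
exists (@Ordinal 4 1 isT),
  (mk i j k l (e i + g) (e j - g) (e k) (e l), mk i j k l (e i - g) (e j + g) (e k) (e l)).
rewrite /Fam /mk /= !ffunE; slabs Hu; rewrite /FamR /=; splitall; lra.
Qed.

Lemma fiber_mix (R : realType) (T : dmap R) (x : pt R) :
  fiber T x -> is_mixture_of_two_stars T.
Proof.
case=> P1 [P2 H]; exists (star_metric x.1), (star_metric x.2).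
split; first by exists x.1.
split; first by exists x.2.
exact: H.
Qed.

Theorem lemma2p6 (R : realType) :
  exists Fam : 'I_4 -> 'I_4 -> 'I_4 -> 'I_4 -> {ffun 'I_4 -> R} -> R ->
               'I_4 -> pt R -> Prop,
    (forall (pi : {perm 'I_4}) i j k l e g m (x : pt R),
        Fam (pi i) (pi j) (pi k) (pi l) (relabel_w pi e) g m x <->
        exists y, Fam i j k l e g m y /\ x = relabel_pt pi y) /\
    forall (i j k l : 'I_4) (e : {ffun 'I_4 -> R}) (g : R),
      uniq [:: i; j; k; l] -> (forall p, 0 < e p) -> 0 < g ->
      let T := quartet_metric i j e g in
      (is_mixture_of_two_stars T <->
         (g < e i /\ g < e j) \/ (g < e k /\ g < e l)) /\
      ((g < e i /\ g < e j) /\ ~ (g < e k /\ g < e l) ->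
         fiber_decomp T (Fam i j k l e g)) /\
      (~ (g < e i /\ g < e j) /\ (g < e k /\ g < e l) ->
         fiber_decomp T (Fam k l i j e g)) /\
      ((g < e i /\ g < e j) /\ (g < e k /\ g < e l) ->
         fiber_decomp T (fun bm : bool * 'I_4 =>
           if bm.1 then Fam i j k l e g bm.2 else Fam k l i j e g bm.2)).
Proof.
exists (@Fam R); split.
  by move=> pi i j k l e g m x; exact: Fam_equiv.
move=> i j k l e g Hu He Hg T.
split; last split; last split.
- split.
  + case=> D [Db [[w [Pw HD]] [[v [Pv HDb]] HT]]].
    have Hf : fiber T (w, v).
      by split => //; split => // p q; rewrite HT /tmix HD HDb.
    case: (classifyF Hu Hg Hf) => [[m H]|[[m H]|[[m H]|[m H]]]].
    * by left; exact: Fam_ne Hg H.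
    * by left; exact: Fam_ne Hg H.
    * by right; exact: Fam_ne Hg H.
    * by right; exact: Fam_ne Hg H.
  + case=> [[hi hj]|[hk hl]].
    * have [m [x H]] := witness Hu He Hg hi hj.
      exact: fiber_mix (Fam_fiber Hu Hg H).
    * have [m [x H]] := witness (uniq_klij Hu) He Hg hk hl.
      exact: fiber_mix (Fam_fiber' Hu Hg H).
- by move=> [[hi hj] hn]; exact: decomp1.
- move=> [hn [hk hl]]; rewrite /T -(qm_swap e g Hu).
  exact: decomp1 (uniq_klij Hu) He Hg hk hl hn.
- by move=> [[hi hj] [hk hl]]; exact: decomp2.
Qed.
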